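(* Let $N\ge2$, $R\in[0,1]$, $\alpha>0$, and set $K^*(N,p)=|\mathbb S^{N-1}|^{\frac{1-p}{p+1}}\left(\frac{2(p+1)}{p-1}\right)^{\frac{2p}{p+1}}$. Then $$\int_{\partial B}|Du_{\alpha,\mathrm{rad}}|^2d\sigma\le K^*(N,p)\frac{(C_{\alpha,\mathrm{rad}})^{2p/(p+1)}}{(\alpha+1)^{2/(p+1)}}.$$
   Context: $B=B(0,1)\subset\mathbb R^N$, $|\mathbb S^{N-1}|=2\pi^{N/2}/\Gamma(N/2)$; $p\in(1,\frac{N+2}{N-2})$ if $N\ge3$, $p>1$ if $N=2$. Weight $V=V_{R,\alpha}$: for $R\in(0,1)$, $V(r)=(1-r/R)^\alpha$ for $0\le r<R$, $\left(1-\frac{1-r}{1-R}\right)^\alpha$ for $R\le r\le1$; $V=|x|^\alpha$ if $R=0$; $V=(1-|x|)^\alpha$ if $R=1$. $S_{\alpha,\mathrm{rad}}=\inf_{0\ne u\in H^1_{0,\mathrm{rad}}(B)}\frac{\int_B|Du|^2}{(\int_BV|u|^{p+1})^{2/(p+1)}}$; $u^*_{\alpha,\mathrm{rad}}$ is a positive radial minimiser with $\int_BV|u^*_{\alpha,\mathrm{rad}}|^{p+1}=1$, and $u_{\alpha,\mathrm{rad}}=S_{\alpha,\mathrm{rad}}^{1/(p-1)}u^*_{\alpha,\mathrm{rad}}$, which solves $-\Delta u=V(|x|)u^p$ in $B$, $u=0$ on $\partial B$. $C_{\alpha,\mathrm{rad}}=I(u_{\alpha,\mathrm{rad}})$ where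 $I(u)=\frac12\int_B|Du|^2-\frac1{p+1}\int_BV|u|^{p+1}$. *)

(* Defs.v *)
From Stdlib Require Import Reals Lra Lia Arith Factorial Classical ClassicalEpsilon.
Open Scope R_scope.

(* Real power x^a for a > 0, with the convention 0^a = 0 (Rpower 0 a = 1 in Stdlib). *)
Definition rpow (x a : R) : R :=
  if Rlt_dec 0 x then Rpower x a else 0.

(* |S^{N-1}| = 2 pi^{N/2} / Gamma(N/2), written out for integer N:
   N = 2m   : 2 pi^m / (m-1)!
   N = 2m+1 : 2 pi^m 4^m m! / (2m)!   (since Gamma(m+1/2) = (2m)! sqrt(pi) / (4^m m!)) *)
Definition surf (N : nat) : R :=
  let m := Nat.div N 2 in
  if Nat.even N then 2 * PI ^ m / INR (fact (m - 1))
  else 2 * PI ^ m * 4 ^ m * INR (fact m) / INR (fact (2 * m)).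

(* The weight V_{R,alpha} as a function of r = |x|. *)
Definition Vw (Rr alpha r : R) : R :=
  if Req_EM_T Rr 0 then rpow r alpha
  else if Req_EM_T Rr 1 then rpow (1 - r) alpha
  else if Rlt_dec r Rr then rpow (1 - r / Rr) alpha
  else rpow (1 - (1 - r) / (1 - Rr)) alpha.

(* Riemann integral on [a,b] as a total function (value of RiemannInt when
   f is Riemann integrable; unspecified otherwise). *)
Definition integ (f : R -> R) (a b : R) : R :=
  epsilon (inhabits 0)
    (fun I => exists pr : Riemann_integrable f a b, RiemannInt pr = I).

Definition C1_on01 (w w' : R -> R) : Prop :=
  (forall r, 0 <= r <= 1 -> derivable_pt_lim w r (w' r)) /\
  (forall r, 0 <= r <= 1 -> forall eps, 0 < eps -> exists delta, 0 < delta /\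
     forall s, 0 <= s <= 1 -> Rabs (s - r) < delta -> Rabs (w' s - w' r) < eps).

(* Radial profiles of nonzero competitors u(x) = w(|x|) vanishing on the boundary. *)
Definition admissible (w w' : R -> R) : Prop :=
  C1_on01 w w' /\ w 1 = 0 /\ exists r, 0 <= r <= 1 /\ w r <> 0.

(* int_B |Du|^2 in polar coordinates *)
Definition Dint (N : nat) (w' : R -> R) : R :=
  surf N * integ (fun r => (w' r) ^ 2 * r ^ (N - 1)) 0 1.

(* int_B V |u|^{p+1} in polar coordinates *)
Definition Pint (N : nat) (p Rr alpha : R) (w : R -> R) : R :=
  surf N * integ (fun r => Vw Rr alpha r * rpow (Rabs (w r)) (p + 1) * r ^ (N - 1)) 0 1.

Definition Quot (N : nat) (p Rr alpha : R) (w w' : R -> R) : R :=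
  Dint N w' / rpow (Pint N p Rr alpha w) (2 / (p + 1)).

Definition RayleighSet (N : nat) (p Rr alpha : R) (q : R) : Prop :=
  exists w w', admissible w w' /\ q = Quot N p Rr alpha w w'.

Definition is_inf (E : R -> Prop) (m : R) : Prop :=
  (forall x, E x -> m <= x) /\ (forall b, (forall x, E x -> b <= x) -> b <= m).

Definition Ienergy (N : nat) (p Rr alpha : R) (u u' : R -> R) : R :=
  / 2 * Dint N u' - / (p + 1) * Pint N p Rr alpha u.

Definition Kstar (N : nat) (p : R) : R :=
  rpow (surf N) ((1 - p) / (p + 1)) * rpow (2 * (p + 1) / (p - 1)) (2 * p / (p + 1)).

(* Main.v *)
Require Import Defs.
From Stdlib Require Import Reals Lra Lia Arith Factorial Classical ClassicalEpsilon FunctionalExtensionality.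
From Coquelicot Require Import Coquelicot.
Open Scope R_scope.

Lemma cpt_intro f x :
  (forall eps, 0 < eps -> exists d, 0 < d /\ forall y, Rabs (y - x) < d -> Rabs (f y - f x) < eps) ->
  continuity_pt f x.
Proof.
  intros H eps Heps. destruct (H eps Heps) as [d [Hd Hy]]. exists d; split; auto.
  intros y [_ Hy2]. apply Hy. exact Hy2.
Qed.

Lemma cpt_elim f x : continuity_pt f x ->
  forall eps, 0 < eps -> exists d, 0 < d /\ forall y, Rabs (y - x) < d -> Rabs (f y - f x) < eps.
Proof.
  intros H eps Heps. destruct (H eps Heps) as [d [Hd Hy]]. exists d; split; auto.
  intros y Hyx. destruct (Req_dec y x) as [->|Hne].
  - rewrite Rminus_diag, Rabs_R0; auto.
  - apply Hy. split; [split; [exact I| auto] | exact Hyx].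
Qed.

Definition cl (x : R) : R := Rmax 0 (Rmin 1 x).

Lemma cl_in x : 0 <= cl x <= 1.
Proof. unfold cl, Rmax, Rmin. repeat destruct Rle_dec; lra. Qed.

Lemma cl_id x : 0 <= x <= 1 -> cl x = x.
Proof. intros. unfold cl, Rmax, Rmin. repeat destruct Rle_dec; lra. Qed.

Lemma cl_lip x y : Rabs (cl y - cl x) <= Rabs (y - x).
Proof. unfold cl, Rmax, Rmin. repeat destruct Rle_dec; unfold Rabs; repeat destruct Rcase_abs; lra. Qed.

Definition cont01 (f : R -> R) : Prop :=
  forall z, 0 <= z <= 1 -> continuity_pt (fun x => f (cl x)) z.

Lemma cont01_ed f :
  (forall r, 0 <= r <= 1 -> forall eps, 0 < eps -> exists d, 0 < d /\
     forall s, 0 <= s <= 1 -> Rabs (s - r) < d -> Rabs (f s - f r) < eps) -> cont01 f.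
Proof.
  intros H z Hz. apply cpt_intro. intros eps Heps.
  destruct (H z Hz eps Heps) as [d [Hd Hs]]. exists d; split; auto.
  intros y Hy. rewrite (cl_id z Hz).
  apply Hs. apply cl_in. pose proof (cl_lip z y). rewrite (cl_id z Hz) in H0. lra.
Qed.

Lemma cont01_elim f : cont01 f -> forall r, 0 <= r <= 1 -> forall eps, 0 < eps -> exists d, 0 < d /\
     forall s, 0 <= s <= 1 -> Rabs (s - r) < d -> Rabs (f s - f r) < eps.
Proof.
  intros H r Hr eps Heps. destruct (cpt_elim _ _ (H r Hr) eps Heps) as [d [Hd Hy]].
  exists d; split; auto. intros s Hs Hsr. specialize (Hy s Hsr).
  rewrite !cl_id in Hy; auto.
Qed.

Lemma cont01_glob f : (forall x, 0 <= x <= 1 -> continuity_pt f x) -> cont01 f.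
Proof.
  intros H. apply cont01_ed. intros r Hr eps Heps.
  destruct (cpt_elim _ _ (H r Hr) eps Heps) as [d [Hd Hy]]. exists d; split; auto.
Qed.

Lemma cont01_ext f g : (forall r, 0 <= r <= 1 -> f r = g r) -> cont01 f -> cont01 g.
Proof.
  intros E H z Hz. apply continuity_pt_ext with (fun x => f (cl x)).
  - intros x. apply E, cl_in.
  - apply H, Hz.
Qed.

Lemma cont01_plus f g : cont01 f -> cont01 g -> cont01 (fun r => f r + g r).
Proof.
  intros Hf Hg z Hz. apply continuity_pt_ext with (plus_fct (fun x => f (cl x)) (fun x => g (cl x))).
  - intros; reflexivity.
  - apply continuity_pt_plus; auto.
Qed.

Lemma cont01_mult f g : cont01 f -> cont01 g -> cont01 (fun r => f r * g r).
Proof.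
  intros Hf Hg z Hz. apply continuity_pt_ext with (mult_fct (fun x => f (cl x)) (fun x => g (cl x))).
  - intros; reflexivity.
  - apply continuity_pt_mult; auto.
Qed.

Lemma cont01_const c : cont01 (fun _ => c).
Proof. intros z Hz. apply continuity_pt_const. intros x y; reflexivity. Qed.

Lemma cont01_id : cont01 (fun r => r).
Proof. apply cont01_glob. intros; apply continuity_pt_id. Qed.

Lemma cont01_comp h f : (forall y, continuity_pt h y) -> cont01 f -> cont01 (fun r => h (f r)).
Proof.
  intros Hh Hf z Hz. apply continuity_pt_ext with (comp h (fun x => f (cl x))).
  - intros; reflexivity.
  - apply continuity_pt_comp; auto.
Qed.

Lemma cont_pow n y : continuity_pt (fun x => x ^ n) y.
Proof.
  apply derivable_continuous_pt. exists (INR n * y ^ pred n). apply derivable_pt_lim_pow.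
Qed.

Lemma cont01_pow f n : cont01 f -> cont01 (fun r => f r ^ n).
Proof. intros. apply (cont01_comp (fun x => x ^ n)); auto. intros; apply cont_pow. Qed.

Lemma cont01_abs f : cont01 f -> cont01 (fun r => Rabs (f r)).
Proof. intros. apply (cont01_comp Rabs); auto. intros; apply Rcontinuity_abs. Qed.

Lemma cont01_exRInt f : cont01 f -> ex_RInt f 0 1.
Proof.
  intros H. apply ex_RInt_ext with (fun x => f (cl x)).
  - intros x Hx. rewrite Rmin_left, Rmax_right in Hx by lra. rewrite cl_id; auto; lra.
  - apply (ex_RInt_continuous (V:=R_CompleteNormedModule)). intros z Hz. rewrite Rmin_left, Rmax_right in Hz by lra.
    apply continuity_pt_filterlim. apply H; auto.
Qed.

Lemma integ_RInt f : ex_RInt f 0 1 -> integ f 0 1 = RInt f 0 1.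
Proof.
  intros H. unfold integ.
  destruct (epsilon_spec (inhabits 0)
    (fun I => exists pr : Riemann_integrable f 0 1, RiemannInt pr = I)) as [pr Hpr].
  - exists (RiemannInt (ex_RInt_Reals_0 _ _ _ H)). eexists; reflexivity.
  - rewrite <- Hpr. symmetry. apply RInt_Reals.
Qed.

Definition RI (f : R -> R) : R := RInt f 0 1.

Lemma integ_RI f : ex_RInt f 0 1 -> integ f 0 1 = RI f.
Proof. apply integ_RInt. Qed.

Lemma RInt_lin f g c : ex_RInt f 0 1 -> ex_RInt g 0 1 ->
  RI (fun x => f x + c * g x) = RI f + c * RI g.
Proof.
  intros Hf Hg. unfold RI.
  pose proof (RInt_plus f (fun x => scal c (g x)) 0 1 Hf (ex_RInt_scal _ _ _ c Hg)) as E.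
  pose proof (RInt_scal g 0 1 c Hg) as E2.
  transitivity (plus (RInt f 0 1) (RInt (fun x => scal c (g x)) 0 1)). exact E.
  change (RInt f 0 1 + RInt (fun x => c * g x) 0 1 = RInt f 0 1 + c * RInt g 0 1).
  f_equal. exact E2.
Qed.

Lemma RInt_scalR f c : ex_RInt f 0 1 -> RI (fun x => c * f x) = c * RI f.
Proof. intros Hf. exact (RInt_scal f 0 1 c Hf). Qed.

Lemma RInt_mono f g : ex_RInt f 0 1 -> ex_RInt g 0 1 ->
  (forall x, 0 <= x <= 1 -> f x <= g x) -> RI f <= RI g.
Proof. intros. apply RInt_le; auto; try lra. intros; apply H1; lra. Qed.

Lemma RInt_pos f : ex_RInt f 0 1 -> (forall x, 0 <= x <= 1 -> 0 <= f x) -> 0 <= RI f.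
Proof. intros. apply RInt_ge_0; auto; try lra. intros; apply H0; lra. Qed.

Lemma RI_ext f g : (forall x, 0 <= x <= 1 -> f x = g x) -> RI f = RI g.
Proof. intros. apply RInt_ext. intros x Hx. rewrite Rmin_left, Rmax_right in Hx by lra. apply H; lra. Qed.

Lemma RI_is f l : is_RInt f 0 1 l -> RI f = l.
Proof. intros H. apply (is_RInt_unique (V:=R_CompleteNormedModule)). exact H. Qed.

Lemma rpow_ge0 x a : 0 <= rpow x a.
Proof. unfold rpow. destruct Rlt_dec; [unfold Rpower; left; apply exp_pos | lra]. Qed.

Lemma rpow_pos x a : 0 < x -> rpow x a = exp (a * ln x).
Proof. intros. unfold rpow. destruct Rlt_dec; [reflexivity | lra]. Qed.

Lemma rpow_gt0 x a : 0 < x -> 0 < rpow x a.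
Proof. intros. rewrite rpow_pos by auto. apply exp_pos. Qed.

Lemma rpow_nonpos x a : x <= 0 -> rpow x a = 0.
Proof. intros. unfold rpow. destruct Rlt_dec; [lra | reflexivity]. Qed.

Lemma rpow_one a : rpow 1 a = 1.
Proof. rewrite rpow_pos by lra. rewrite ln_1, Rmult_0_r, exp_0. reflexivity. Qed.

Lemma rpow_small a : 0 < a -> forall eps, 0 < eps -> exists d, 0 < d /\
  forall h, Rabs h < d -> rpow h a < eps.
Proof.
  intros Ha eps He. exists (exp (ln eps / a)). split; [apply exp_pos|].
  intros h Hh. destruct (Rlt_dec 0 h) as [Hp|Hn].
  - rewrite rpow_pos by auto. rewrite Rabs_pos_eq in Hh by lra.
    assert (ln h < ln eps / a).
    { rewrite <- (ln_exp (ln eps / a)). apply ln_increasing; auto. }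
    rewrite <- (exp_ln eps) by auto. apply exp_increasing.
    apply Rmult_lt_compat_l with (r := a) in H; auto.
    replace (a * (ln eps / a)) with (ln eps) in H by (field; lra). lra.
  - rewrite rpow_nonpos by lra. auto.
Qed.

Lemma dlim_local f g y l : (exists r, 0 < r /\ forall z, Rabs (z - y) < r -> f z = g z) ->
  derivable_pt_lim f y l -> derivable_pt_lim g y l.
Proof.
  intros [r [Hr E]] H eps He. destruct (H eps He) as [d Hd].
  assert (Hm : 0 < Rmin d r) by (apply Rmin_pos; [apply cond_pos | auto]).
  exists (mkposreal _ Hm). intros h Hh0 Hh. simpl in Hh.
  rewrite <- !E. apply Hd; auto. apply Rlt_le_trans with (1 := Hh), Rmin_l.
  rewrite Rminus_diag, Rabs_R0; auto.
  replace (y + h - y) with h by ring. apply Rlt_le_trans with (1 := Hh), Rmin_r.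
Qed.

Lemma dlim_cont f y l : derivable_pt_lim f y l -> continuity_pt f y.
Proof. intros H. apply derivable_continuous_pt. exists l. exact H. Qed.

Lemma rpow_dpos a y : 0 < y -> derivable_pt_lim (fun x => rpow x a) y (a * Rpower y (a - 1)).
Proof.
  intros Hy. apply dlim_local with (fun x => Rpower x a).
  - exists y. split; auto. intros z Hz. unfold rpow. destruct Rlt_dec; auto.
    exfalso. unfold Rabs in Hz; destruct Rcase_abs in Hz; lra.
  - apply derivable_pt_lim_power; auto.
Qed.

Lemma rpow_cont a : 0 < a -> forall y, continuity_pt (fun x => rpow x a) y.
Proof.
  intros Ha y. destruct (Rlt_dec 0 y) as [Hp|Hn].
  - eapply dlim_cont. apply rpow_dpos; auto.
  - destruct (Req_dec y 0) as [->|Hne].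
    + apply cpt_intro. intros eps He. destruct (rpow_small a Ha eps He) as [d [Hd Hh]].
      exists d; split; auto. intros z Hz. rewrite (rpow_nonpos 0) by lra.
      rewrite Rminus_0_r in *. rewrite Rabs_pos_eq by apply rpow_ge0. auto.
    + apply cpt_intro. intros eps He. exists (- y). split; [lra|].
      intros z Hz. rewrite !rpow_nonpos; [rewrite Rminus_diag, Rabs_R0; auto|lra|].
      unfold Rabs in Hz; destruct Rcase_abs in Hz; lra.
Qed.

Lemma rpow_mul1 h a : 0 < h -> rpow h (a + 1) = rpow h a * h.
Proof.
  intros. rewrite !rpow_pos by auto. rewrite Rmult_plus_distr_r, exp_plus, Rmult_1_l, exp_ln; auto.
Qed.

Lemma rpow_deriv a : 0 < a -> forall y,
  derivable_pt_lim (fun x => rpow x (a + 1)) y ((a + 1) * rpow y a).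
Proof.
  intros Ha y. destruct (Rlt_dec 0 y) as [Hp|Hn].
  - replace (rpow y a) with (Rpower y (a + 1 - 1)).
    + apply rpow_dpos; auto.
    + replace (a + 1 - 1) with a by ring. unfold rpow. destruct Rlt_dec; [auto|lra].
  - destruct (Req_dec y 0) as [->|Hne].
    + intros eps He. destruct (rpow_small a Ha eps He) as [d [Hd Hh]].
      exists (mkposreal d Hd). intros h Hh0 Hhd. simpl in Hhd.
      rewrite (rpow_nonpos 0) by lra. rewrite (rpow_nonpos 0) by lra.
      rewrite Rplus_0_l, Rminus_0_r, Rmult_0_r, Rminus_0_r.
      destruct (Rlt_dec 0 h) as [Hp'|Hn'].
      * rewrite rpow_mul1 by auto. replace (rpow h a * h / h) with (rpow h a) by (field; lra).
        rewrite Rabs_pos_eq by apply rpow_ge0. auto.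
      * rewrite rpow_nonpos by lra. unfold Rdiv. rewrite Rmult_0_l, Rabs_R0. auto.
    + rewrite (rpow_nonpos y) by lra. rewrite Rmult_0_r.
      apply dlim_local with (fct_cte 0).
      * exists (- y). split; [lra|]. intros z Hz. unfold fct_cte. rewrite rpow_nonpos; auto.
        unfold Rabs in Hz; destruct Rcase_abs in Hz; lra.
      * apply derivable_pt_lim_const.
Qed.

Lemma rpow_lin_deriv a A B : 0 < a -> forall y,
  derivable_pt_lim (fun x => rpow (A + B * x) (a + 1) / (B * (a + 1))) y
     (rpow (A + B * y) a * (B * / (B * (a + 1)) * (a + 1))).
Proof.
  intros Ha y.
  assert (H1 : derivable_pt_lim (fun x => A + B * x) y B).
  { pose proof (derivable_pt_lim_plus (fct_cte A) (mult_real_fct B id) y _ _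
      (derivable_pt_lim_const A y) (derivable_pt_lim_scal _ B _ _ (derivable_pt_lim_id y))) as H0.
    replace (0 + B * 1) with B in H0 by ring. exact H0. }
  pose proof (derivable_pt_lim_comp _ _ y _ _ H1 (rpow_deriv a Ha (A + B * y))) as H2.
  pose proof (derivable_pt_lim_scal _ (/ (B * (a + 1))) y _ H2) as H3.
  replace (rpow (A + B * y) a * (B * / (B * (a + 1)) * (a + 1)))
     with (/ (B * (a + 1)) * ((a + 1) * rpow (A + B * y) a * B)) by ring.
  eapply dlim_local; [|exact H3]. exists 1. split; [lra|]. intros z _.
  unfold mult_real_fct, comp. unfold Rdiv. ring.
Qed.

Lemma lin_int a A B x0 x1 : 0 < a -> B <> 0 ->
  is_RInt (fun r => rpow (A + B * r) a) x0 x1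
    ((rpow (A + B * x1) (a + 1) - rpow (A + B * x0) (a + 1)) / (B * (a + 1))).
Proof.
  intros Ha HB.
  set (F := fun x => rpow (A + B * x) (a + 1) / (B * (a + 1))).
  set (dF := fun y => rpow (A + B * y) a * (B * / (B * (a + 1)) * (a + 1))).
  assert (H : is_RInt dF x0 x1 (minus (F x1) (F x0))).
  { apply (is_RInt_derive (V:=R_CompleteNormedModule)).
    - intros x _. apply is_derive_Reals. apply rpow_lin_deriv; auto.
    - intros x _. apply continuity_pt_filterlim. unfold dF.
      apply continuity_pt_ext with (mult_fct (comp (fun x => rpow x a) (fun y => A + B * y))
               (fct_cte (B * / (B * (a + 1)) * (a + 1)))).
      + intros; reflexivity.
      + apply continuity_pt_mult; [|apply continuity_pt_const; intros ? ?; reflexivity].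
        apply continuity_pt_comp; [|apply rpow_cont; auto].
        apply continuity_pt_ext with (plus_fct (fct_cte A) (mult_real_fct B (fun x => x))).
        * intros; reflexivity.
        * apply continuity_pt_plus; [apply continuity_pt_const; intros ? ?; reflexivity|].
          apply continuity_pt_scal, continuity_pt_id. }
  replace ((rpow (A + B * x1) (a + 1) - rpow (A + B * x0) (a + 1)) / (B * (a + 1)))
    with (minus (F x1) (F x0)).
  - eapply is_RInt_ext; [|exact H]. intros x _. unfold dF.
    replace (B * / (B * (a + 1)) * (a + 1)) with 1. apply Rmult_1_r. field. split; [lra|auto].
  - assert (E : F x1 - F x0 = (rpow (A + B * x1) (a + 1) - rpow (A + B * x0) (a + 1)) / (B * (a + 1))) by (unfold F; field; split; [lra|auto]). exact E.
Qed.

Lemma V_ge0 Rr alpha r : 0 <= Vw Rr alpha r.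
Proof. unfold Vw. repeat destruct Req_EM_T; try destruct Rlt_dec; apply rpow_ge0. Qed.

Lemma V_form Rr alpha r : 0 < Rr < 1 ->
  Vw Rr alpha r = rpow (/ 2 * ((1 + (- / Rr) * r) + ((1 - / (1 - Rr)) + / (1 - Rr) * r)
     + Rabs ((1 + (- / Rr) * r) + (-1) * ((1 - / (1 - Rr)) + / (1 - Rr) * r)))) alpha.
Proof.
  intros HR. unfold Vw. destruct (Req_EM_T Rr 0); [lra|]. destruct (Req_EM_T Rr 1); [lra|].
  assert (E1 : 1 + (- / Rr) * r = 1 - r / Rr) by (field; lra).
  assert (E2 : (1 - / (1 - Rr)) + / (1 - Rr) * r = 1 - (1 - r) / (1 - Rr)) by (field; lra).
  rewrite E1, E2. destruct (Rlt_dec r Rr).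
  - assert (0 < 1 - r / Rr).
    { apply Rlt_Rminus. apply (Rmult_lt_reg_r Rr); [lra|]. unfold Rdiv. rewrite Rmult_assoc, Rinv_l; lra. }
    assert (1 - (1 - r) / (1 - Rr) < 0).
    { assert (1 < (1 - r) / (1 - Rr)); [|lra]. apply (Rmult_lt_reg_r (1 - Rr)); [lra|].
      unfold Rdiv. rewrite Rmult_assoc, Rinv_l; lra. }
    set (X := 1 - r / Rr) in *. set (Y := 1 - (1 - r) / (1 - Rr)) in *. f_equal. rewrite Rabs_pos_eq by lra. field.
  - assert (1 - r / Rr <= 0).
    { assert (1 <= r / Rr); [|lra]. apply (Rmult_le_reg_r Rr); [lra|].
      unfold Rdiv. rewrite Rmult_assoc, Rinv_l; lra. }
    assert (0 <= 1 - (1 - r) / (1 - Rr)).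
    { assert ((1 - r) / (1 - Rr) <= 1); [|lra]. apply (Rmult_le_reg_r (1 - Rr)); [lra|].
      unfold Rdiv. rewrite Rmult_assoc, Rinv_l; lra. }
    set (X := 1 - r / Rr) in *. set (Y := 1 - (1 - r) / (1 - Rr)) in *. f_equal. rewrite Rabs_left1 by lra. field.
Qed.

Lemma cont01_lin A B : cont01 (fun r => A + B * r).
Proof. apply cont01_plus; [apply cont01_const|]. apply cont01_mult; [apply cont01_const|apply cont01_id]. Qed.

Lemma V_cont Rr alpha : 0 <= Rr <= 1 -> 0 < alpha -> cont01 (Vw Rr alpha).
Proof.
  intros HR Ha.
  destruct (Req_dec Rr 0) as [E0|N0].
  - apply cont01_ext with (fun r => rpow (0 + 1 * r) alpha).
    + intros r _. unfold Vw. destruct (Req_EM_T Rr 0); [|lra]. f_equal; ring.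
    + apply (cont01_comp (fun x => rpow x alpha)); [apply rpow_cont; auto|apply cont01_lin].
  - destruct (Req_dec Rr 1) as [E1|N1].
    + apply cont01_ext with (fun r => rpow (1 + (-1) * r) alpha).
      * intros r _. unfold Vw. destruct (Req_EM_T Rr 0); [lra|]. destruct (Req_EM_T Rr 1); [|lra]. f_equal; ring.
      * apply (cont01_comp (fun x => rpow x alpha)); [apply rpow_cont; auto|apply cont01_lin].
    + apply cont01_ext with (fun r => rpow (/ 2 * ((1 + (- / Rr) * r) + ((1 - / (1 - Rr)) + / (1 - Rr) * r)
         + Rabs ((1 + (- / Rr) * r) + (-1) * ((1 - / (1 - Rr)) + / (1 - Rr) * r)))) alpha).
      * intros r _. symmetry. apply V_form. lra.
      * apply (cont01_comp (fun x => rpow x alpha)); [apply rpow_cont; auto|].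
        apply cont01_mult; [apply cont01_const|].
        apply cont01_plus; [apply cont01_plus; apply cont01_lin|].
        apply cont01_abs. apply cont01_plus; [apply cont01_lin|].
        apply cont01_mult; [apply cont01_const|apply cont01_lin].
Qed.

Lemma V_int Rr alpha : 0 <= Rr <= 1 -> 0 < alpha -> is_RInt (Vw Rr alpha) 0 1 (1 / (alpha + 1)).
Proof.
  intros HR Ha.
  destruct (Req_dec Rr 0) as [E0|N0].
  - pose proof (lin_int alpha 0 1 0 1 Ha ltac:(lra)) as H.
    replace (0 + 1 * 1) with 1 in H by ring. replace (0 + 1 * 0) with 0 in H by ring.
    rewrite rpow_one, (rpow_nonpos 0) in H by lra.
    replace ((1 - 0) / (1 * (alpha + 1))) with (1 / (alpha + 1)) in H by (field; lra).
    eapply is_RInt_ext; [|exact H]. intros r _. unfold Vw. destruct (Req_EM_T Rr 0); [|lra]. f_equal; ring.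
  - destruct (Req_dec Rr 1) as [E1|N1].
    + pose proof (lin_int alpha 1 (-1) 0 1 Ha ltac:(lra)) as H.
      replace (1 + -1 * 1) with 0 in H by ring. replace (1 + -1 * 0) with 1 in H by ring.
      rewrite rpow_one, (rpow_nonpos 0) in H by lra.
      replace ((0 - 1) / (-1 * (alpha + 1))) with (1 / (alpha + 1)) in H by (field; lra).
      eapply is_RInt_ext; [|exact H]. intros r _. unfold Vw. destruct (Req_EM_T Rr 0); [lra|].
      destruct (Req_EM_T Rr 1); [|lra]. f_equal; ring.
    + assert (HR' : 0 < Rr < 1) by lra.
      pose proof (lin_int alpha 1 (- / Rr) 0 Rr Ha) as H1.
      assert (- / Rr <> 0). { apply Ropp_neq_0_compat, Rinv_neq_0_compat; lra. }
      specialize (H1 H).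
      replace (1 + - / Rr * Rr) with 0 in H1 by (field; lra). replace (1 + - / Rr * 0) with 1 in H1 by ring.
      rewrite rpow_one, (rpow_nonpos 0) in H1 by lra.
      pose proof (lin_int alpha (1 - / (1 - Rr)) (/ (1 - Rr)) Rr 1 Ha) as H2.
      assert (/ (1 - Rr) <> 0). { apply Rinv_neq_0_compat; lra. }
      specialize (H2 H0).
      replace (1 - / (1 - Rr) + / (1 - Rr) * Rr) with 0 in H2 by (field; lra).
      replace (1 - / (1 - Rr) + / (1 - Rr) * 1) with 1 in H2 by (field; lra).
      rewrite rpow_one, (rpow_nonpos 0) in H2 by lra.
      assert (G1 : is_RInt (Vw Rr alpha) 0 Rr ((0 - 1) / (- / Rr * (alpha + 1)))).
      { eapply is_RInt_ext; [|exact H1]. intros r Hr. rewrite Rmin_left, Rmax_right in Hr by lra.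
        unfold Vw. destruct (Req_EM_T Rr 0); [lra|]. destruct (Req_EM_T Rr 1); [lra|].
        destruct (Rlt_dec r Rr); [|lra]. f_equal. field. lra. }
      assert (G2 : is_RInt (Vw Rr alpha) Rr 1 ((1 - 0) / (/ (1 - Rr) * (alpha + 1)))).
      { eapply is_RInt_ext; [|exact H2]. intros r Hr. rewrite Rmin_left, Rmax_right in Hr by lra.
        unfold Vw. destruct (Req_EM_T Rr 0); [lra|]. destruct (Req_EM_T Rr 1); [lra|].
        destruct (Rlt_dec r Rr); [lra|]. f_equal. field. lra. }
      pose proof (is_RInt_Chasles _ _ _ _ _ _ G1 G2) as G.
      replace (1 / (alpha + 1)) with (plus ((0 - 1) / (- / Rr * (alpha + 1))) ((1 - 0) / (/ (1 - Rr) * (alpha + 1)))).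
      exact G. assert (E : (0 - 1) / (- / Rr * (alpha + 1)) + (1 - 0) / (/ (1 - Rr) * (alpha + 1)) = 1 / (alpha + 1)) by (field; lra). exact E.
Qed.

Lemma amgm a b t : 0 <= t <= 1 -> exp (t * a + (1 - t) * b) <= t * exp a + (1 - t) * exp b.
Proof.
  intros Ht. set (m := t * a + (1 - t) * b).
  assert (Ea : exp a = exp m * exp (a - m)) by (rewrite <- exp_plus; f_equal; ring).
  assert (Eb : exp b = exp m * exp (b - m)) by (rewrite <- exp_plus; f_equal; ring).
  pose proof (exp_ineq1_le (a - m)). pose proof (exp_ineq1_le (b - m)). pose proof (exp_pos m).
  rewrite Ea, Eb.
  assert (t * (exp (a - m)) + (1 - t) * exp (b - m) >= 1).
  { assert (t * (1 + (a - m)) + (1 - t) * (1 + (b - m)) = 1) by (unfold m; ring). nra. }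
  nra.
Qed.

Lemma ln_le y : 0 < y -> ln y <= y - 1.
Proof. intros. pose proof (exp_ineq1_le (ln y)). rewrite exp_ln in H0; lra. Qed.

Lemma tangent x a p : 0 < p -> 0 <= a ->
  rpow a (p + 1) + (p + 1) * rpow a p * (x - a) <= rpow (Rabs x) (p + 1).
Proof.
  intros Hp Ha. pose proof (rpow_ge0 (Rabs x) (p + 1)).
  destruct (Req_dec a 0) as [->|Hne].
  - rewrite !(rpow_nonpos 0) by lra. lra.
  - assert (Ha' : 0 < a) by lra. rewrite (rpow_mul1 a p Ha').
    pose proof (rpow_gt0 a p Ha').
    destruct (Rle_dec x 0) as [Hx|Hx].
    + assert (H3 : rpow a p * ((p+1)*x - p*a) <= 0).
      { rewrite <- (Rmult_0_r (rpow a p)). apply Rmult_le_compat_l; nra. }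
      replace (rpow a p * a + (p + 1) * rpow a p * (x - a)) with (rpow a p * ((p+1)*x - p*a)) by ring.
      lra.
    + rewrite Rabs_pos_eq by lra. assert (Hx' : 0 < x) by lra.
      pose proof (amgm ((p + 1) * ln x) ((p + 1) * ln a) (/ (p + 1))) as H1.
      assert (Ht : 0 <= / (p + 1) <= 1).
      { split. left; apply Rinv_0_lt_compat; lra. rewrite <- Rinv_1. apply Rinv_le_contravar; lra. }
      specialize (H1 Ht).
      replace (/ (p + 1) * ((p + 1) * ln x) + (1 - / (p + 1)) * ((p + 1) * ln a))
        with (ln x + p * ln a) in H1 by (field; lra).
      rewrite exp_plus, exp_ln in H1 by auto.
      rewrite <- (rpow_pos x (p + 1)), <- (rpow_pos a (p + 1)), <- (rpow_pos a p) in H1 by auto.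
      rewrite (rpow_mul1 a p Ha') in H1.
      replace (1 - / (p + 1)) with (p / (p + 1)) in H1 by (field; lra).
      apply Rmult_le_compat_l with (r := p + 1) in H1; [|lra].
      replace ((p + 1) * (/ (p + 1) * rpow x (p + 1) + p / (p + 1) * (rpow a p * a)))
        with (rpow x (p + 1) + p * (rpow a p * a)) in H1 by (field; lra).
      nra.
Qed.

Lemma young y p l : 0 < p -> 0 <= y ->
  rpow y p <= p / (p + 1) * exp l * rpow y (p + 1) + / (p + 1) * exp (- p * l).
Proof.
  intros Hp Hy. pose proof (exp_pos l). pose proof (exp_pos (-p * l)).
  destruct (Req_dec y 0) as [->|Hne].
  - rewrite !(rpow_nonpos 0) by lra. assert (0 < / (p + 1)) by (apply Rinv_0_lt_compat; lra). nra.
  - assert (Hy' : 0 < y) by lra.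
    pose proof (amgm (l + (p + 1) * ln y) (- p * l) (p / (p + 1))) as H1.
    assert (Ht : 0 <= p / (p + 1) <= 1).
    { split. apply Rlt_le, Rdiv_lt_0_compat; lra. apply (Rmult_le_reg_r (p + 1)); [lra|].
      unfold Rdiv. rewrite Rmult_assoc, Rinv_l; lra. }
    specialize (H1 Ht).
    replace (p / (p + 1) * (l + (p + 1) * ln y) + (1 - p / (p + 1)) * (- p * l)) with (p * ln y) in H1
      by (field; lra).
    rewrite exp_plus in H1. rewrite <- !rpow_pos in H1 by auto.
    replace (1 - p / (p + 1)) with (/ (p + 1)) in H1 by (field; lra). lra.
Qed.

Lemma conc x q : -1 < x -> 0 < q -> 1 + q * (x / (1 + x)) <= rpow (1 + x) q.
Proof.
  intros Hx Hq. rewrite rpow_pos by lra.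
  pose proof (exp_ineq1_le (q * ln (1 + x))).
  assert (x / (1 + x) <= ln (1 + x)).
  { pose proof (ln_le (/ (1 + x))) as H1. rewrite ln_Rinv in H1 by lra.
    assert (Hi : 0 < / (1 + x)) by (apply Rinv_0_lt_compat; lra). specialize (H1 Hi).
    replace (x / (1 + x)) with (1 - / (1 + x)) by (field; lra). lra. }
  nra.
Qed.

Definition mx (y : R) : R := Rmax 0 y.

Lemma mx_sq y k : Rabs ((mx (y + k)) ^ 2 - (mx y) ^ 2 - 2 * mx y * k) <= k ^ 2.
Proof.
  unfold mx, Rmax. destruct (Rle_dec 0 (y + k)); destruct (Rle_dec 0 y);
  apply Rabs_le; split; nra.
Qed.

Lemma mx_lip a b : Rabs (mx a - mx b) <= Rabs (a - b).
Proof. unfold mx, Rmax. repeat destruct Rle_dec; unfold Rabs; repeat destruct Rcase_abs; lra. Qed.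

Lemma mx_ge0 y : 0 <= mx y.
Proof. unfold mx, Rmax. destruct Rle_dec; lra. Qed.

Lemma mx_le y a : y <= a -> 0 <= a -> mx y <= a.
Proof. unfold mx, Rmax. destruct Rle_dec; lra. Qed.

Lemma mx_neg y : y <= 0 -> mx y = 0.
Proof. unfold mx, Rmax. destruct Rle_dec; lra. Qed.

Lemma mx_pos y : 0 <= y -> mx y = y.
Proof. unfold mx, Rmax. destruct Rle_dec; lra. Qed.

Definition phi (h r : R) : R := 1 - (mx (r - 1 + h)) ^ 2 / h ^ 2.
Definition phi' (h r : R) : R := - 2 * mx (r - 1 + h) / h ^ 2.

Lemma phi_deriv h r : 0 < h -> derivable_pt_lim (phi h) r (phi' h r).
Proof.
  intros Hh eps He. assert (Hh2 : 0 < h ^ 2) by (apply pow_lt; auto).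
  assert (Hd : 0 < eps * h ^ 2) by (apply Rmult_lt_0_compat; auto).
  exists (mkposreal _ Hd). intros k Hk0 Hk. simpl in Hk.
  set (y := r - 1 + h). set (D := (mx (y + k)) ^ 2 - (mx y) ^ 2 - 2 * mx y * k).
  assert (E : (phi h (r + k) - phi h r) / k - phi' h r = - D / (h ^ 2 * k)).
  { unfold phi, phi', D, y. replace (r + k - 1 + h) with (r - 1 + h + k) by ring. field; split; lra. }
  rewrite E. pose proof (mx_sq y k) as HD. fold D in HD.
  unfold Rdiv. rewrite Rabs_mult, Rabs_Ropp, Rabs_Rinv by (apply Rmult_integral_contrapositive; split; lra).
  rewrite Rabs_mult, (Rabs_pos_eq (h ^ 2)) by lra.
  assert (Hk' : 0 < Rabs k) by (apply Rabs_pos_lt; auto).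
  replace (k ^ 2) with (Rabs k * Rabs k) in HD by (rewrite <- Rabs_mult; simpl; rewrite Rmult_1_r; apply Rabs_pos_eq; nra).
  apply (Rmult_lt_reg_r (h ^ 2 * Rabs k)); [apply Rmult_lt_0_compat; auto|].
  rewrite Rmult_assoc, Rinv_l by (apply Rmult_integral_contrapositive; split; lra).
  nra.
Qed.

Lemma phi'_lip h s r : 0 < h -> Rabs (phi' h s - phi' h r) <= 2 / h ^ 2 * Rabs (s - r).
Proof.
  intros Hh. assert (Hh2 : 0 < h ^ 2) by (apply pow_lt; auto).
  unfold phi'. replace (- 2 * mx (s - 1 + h) / h ^ 2 - - 2 * mx (r - 1 + h) / h ^ 2)
    with (- (2 / h ^ 2) * (mx (s - 1 + h) - mx (r - 1 + h))) by (field; lra).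
  rewrite Rabs_mult, Rabs_Ropp, Rabs_pos_eq by (apply Rlt_le, Rdiv_lt_0_compat; lra).
  apply Rmult_le_compat_l; [apply Rlt_le, Rdiv_lt_0_compat; lra|].
  eapply Rle_trans; [apply mx_lip|]. right; f_equal; ring.
Qed.

Lemma phi'_cont h x : 0 < h -> continuity_pt (phi' h) x.
Proof.
  intros Hh. assert (Hh2 : 0 < h ^ 2) by (apply pow_lt; auto).
  apply cpt_intro. intros eps He. exists (eps * h ^ 2 / 2). split; [apply Rdiv_lt_0_compat; nra|].
  intros y Hy. eapply Rle_lt_trans; [apply phi'_lip; auto|].
  apply (Rmult_lt_reg_l (h ^ 2 / 2)); [lra|].
  replace (h ^ 2 / 2 * (2 / h ^ 2 * Rabs (y - x))) with (Rabs (y - x)) by (field; lra). lra.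
Qed.

Lemma phi_C1 h : 0 < h -> C1_on01 (phi h) (phi' h).
Proof.
  intros Hh. split.
  - intros r _. apply phi_deriv; auto.
  - intros r _ eps He. destruct (cpt_elim _ _ (phi'_cont h r Hh) eps He) as [d [Hd Hy]].
    exists d; split; auto.
Qed.

Lemma phi_1 h : 0 < h -> phi h 1 = 0.
Proof. intros. unfold phi. rewrite mx_pos by lra. replace (1 - 1 + h) with h by ring. field. lra. Qed.

Lemma phi_0 h : 0 < h < 1 -> phi h 0 = 1.
Proof. intros. unfold phi. rewrite mx_neg by lra. field. lra. Qed.

Lemma phi_range h r : 0 < h -> 0 <= r <= 1 -> 0 <= phi h r <= 1.
Proof.
  intros Hh Hr. unfold phi. assert (Hh2 : 0 < h ^ 2) by (apply pow_lt; auto).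
  pose proof (mx_ge0 (r - 1 + h)). pose proof (mx_le (r - 1 + h) h ltac:(lra) ltac:(lra)).
  assert (mx (r - 1 + h) ^ 2 <= h ^ 2) by (simpl; nra).
  assert (0 <= mx (r - 1 + h) ^ 2 / h ^ 2 <= 1).
  { split. apply Rdiv_le_0_compat; [apply pow_le; auto|auto].
    apply (Rmult_le_reg_r (h ^ 2)); auto. unfold Rdiv. rewrite Rmult_assoc, Rinv_l; lra. }
  lra.
Qed.

Lemma phi'_le0 h r : 0 < h -> phi' h r <= 0.
Proof.
  intros Hh. unfold phi'. assert (Hh2 : 0 < h ^ 2) by (apply pow_lt; auto).
  pose proof (mx_ge0 (r - 1 + h)). unfold Rdiv.
  assert (0 < / h ^ 2) by (apply Rinv_0_lt_compat; auto). nra.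
Qed.

Lemma phi'_int h : 0 < h < 1 -> RI (phi' h) = -1.
Proof.
  intros Hh. apply RI_is.
  assert (H : is_RInt (phi' h) 0 1 (minus (phi h 1) (phi h 0))).
  { apply (is_RInt_derive (V:=R_CompleteNormedModule)).
    - intros x _. apply is_derive_Reals. apply phi_deriv; lra.
    - intros x _. apply continuity_pt_filterlim. apply phi'_cont; lra. }
  assert (E : phi h 1 - phi h 0 = -1) by (rewrite phi_1, phi_0 by lra; ring).
  rewrite <- E. exact H.
Qed.

Lemma bdry g : cont01 g -> forall eps, 0 < eps -> exists h, 0 < h < 1 /\
  - g 1 - eps <= RI (fun r => g r * phi' h r).
Proof.
  intros Hg eps He. destruct (cont01_elim g Hg 1 ltac:(lra) eps He) as [d [Hd Hs]].
  set (h := Rmin (d / 2) (1 / 2)).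
  assert (Hh : 0 < h < 1).
  { unfold h. split. apply Rmin_pos; lra. eapply Rle_lt_trans; [apply Rmin_r|lra]. }
  assert (Hhd : h <= d / 2) by apply Rmin_l.
  exists h. split; auto.
  assert (Hc : cont01 (phi' h)) by (apply cont01_glob; intros; apply phi'_cont; lra).
  assert (E : RI (fun r => (g 1 + eps) * phi' h r) = - g 1 - eps).
  { rewrite RInt_scalR by (apply cont01_exRInt; auto). rewrite phi'_int by auto. ring. }
  rewrite <- E. apply RInt_mono.
  - apply cont01_exRInt. apply cont01_mult; [apply cont01_const|auto].
  - apply cont01_exRInt. apply cont01_mult; auto.
  - intros r Hr. destruct (Rle_dec (r - 1 + h) 0) as [Hn|Hp].
    + unfold phi'. rewrite mx_neg by auto. lra.
    + assert (Habs : Rabs (r - 1) < d) by (rewrite Rabs_left1 by lra; lra).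
      specialize (Hs r Hr Habs). apply Rabs_def2 in Hs.
      pose proof (phi'_le0 h r (proj1 Hh)). nra.
Qed.

Lemma C1_cont w w' : C1_on01 w w' -> cont01 w /\ cont01 w'.
Proof.
  intros [Hd Hc]. split.
  - apply cont01_glob. intros x Hx. eapply dlim_cont. apply Hd; auto.
  - apply cont01_ed. intros r Hr eps He. destruct (Hc r Hr eps He) as [d [Hd' Hs]].
    exists d; split; auto.
Qed.

Lemma C1_lin f f' g g' t : C1_on01 f f' -> C1_on01 g g' ->
  C1_on01 (fun r => f r + t * g r) (fun r => f' r + t * g' r).
Proof.
  intros [Hf1 Hf2] [Hg1 Hg2]. split.
  - intros r Hr. apply (derivable_pt_lim_plus f (mult_real_fct t g)); auto.
    apply derivable_pt_lim_scal; auto.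
  - intros r Hr eps He.
    destruct (Hf2 r Hr (eps / 2) ltac:(lra)) as [d1 [Hd1 H1]].
    assert (He2 : 0 < eps / (2 * (Rabs t + 1))) by (apply Rdiv_lt_0_compat; [lra|]; pose proof (Rabs_pos t); lra).
    destruct (Hg2 r Hr _ He2) as [d2 [Hd2 H2]].
    exists (Rmin d1 d2). split; [apply Rmin_pos; auto|].
    intros s Hs Hsr. specialize (H1 s Hs (Rlt_le_trans _ _ _ Hsr (Rmin_l _ _))).
    specialize (H2 s Hs (Rlt_le_trans _ _ _ Hsr (Rmin_r _ _))).
    replace (f' s + t * g' s - (f' r + t * g' r)) with ((f' s - f' r) + t * (g' s - g' r)) by ring.
    eapply Rle_lt_trans; [apply Rabs_triang|]. rewrite Rabs_mult.
    assert (Rabs t * Rabs (g' s - g' r) <= Rabs t * (eps / (2 * (Rabs t + 1)))).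
    { apply Rmult_le_compat_l; [apply Rabs_pos | lra]. }
    assert (Rabs t * (eps / (2 * (Rabs t + 1))) <= eps / 2).
    { pose proof (Rabs_pos t). apply (Rmult_le_reg_r (2 * (Rabs t + 1))); [lra|].
      unfold Rdiv. field_simplify; [|lra]. nra. }
    lra.
Qed.

Lemma surf_pos N : (2 <= N)%nat -> 0 < surf N.
Proof.
  intros HN. unfold surf. pose proof PI_RGT_0.
  assert (0 < PI ^ Nat.div N 2) by (apply pow_lt; lra).
  destruct (Nat.even N).
  - apply Rdiv_lt_0_compat; [lra|apply INR_fact_lt_0].
  - apply Rdiv_lt_0_compat; [|apply INR_fact_lt_0].
    assert (0 < 4 ^ Nat.div N 2) by (apply pow_lt; lra). pose proof (INR_fact_lt_0 (Nat.div N 2)).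
    apply Rmult_lt_0_compat; [apply Rmult_lt_0_compat|]; try apply Rmult_lt_0_compat; lra.
Qed.

Lemma rpow_Rpower x a : 0 < x -> rpow x a = Rpower x a.
Proof. intros. unfold rpow. destruct Rlt_dec; [reflexivity|lra]. Qed.

Lemma lim_le A X M t0 : 0 < t0 -> (forall t, -t0 < t < 0 -> A <= X + (-t) * M) -> A <= X.
Proof.
  intros Ht0 H. destruct (Rle_dec A X) as [|Hn]; auto. exfalso.
  pose proof (Rabs_pos M).
  set (u := Rmin (t0 / 2) ((A - X) / (2 * (Rabs M + 1)))).
  assert (Hu : 0 < u) by (apply Rmin_pos; [lra|apply Rdiv_lt_0_compat; lra]).
  assert (Hu1 : u <= t0 / 2) by apply Rmin_l.
  assert (Hu2 : u <= (A - X) / (2 * (Rabs M + 1))) by apply Rmin_r.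
  specialize (H (- u) ltac:(lra)). rewrite Ropp_involutive in H.
  assert (u * M <= u * Rabs M) by (apply Rmult_le_compat_l; [lra|apply Rle_abs]).
  assert (u * (2 * (Rabs M + 1)) <= A - X).
  { apply (Rmult_le_compat_r (2 * (Rabs M + 1))) in Hu2; [|lra].
    unfold Rdiv in Hu2. rewrite Rmult_assoc, Rinv_l in Hu2; lra. }
  nra.
Qed.

Ltac c01 := first
  [ assumption | apply cont01_const | apply cont01_id
  | apply cont01_plus; c01 | apply cont01_mult; c01 | apply cont01_pow; c01 | apply cont01_abs; c01 ].

Lemma var_ineq N p Rr alpha S v v' h :
  (2 <= N)%nat -> 1 < p -> 0 <= Rr <= 1 -> 0 < alpha ->
  is_inf (RayleighSet N p Rr alpha) S -> 0 < S ->
  admissible v v' -> (forall r, 0 <= r <= 1 -> 0 <= v r) -> 0 < v 0 ->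
  surf N * RI (fun r => Vw Rr alpha r * rpow (Rabs (v r)) (p + 1) * r ^ (N - 1)) = 1 ->
  surf N * RI (fun r => (v' r) ^ 2 * r ^ (N - 1)) = S ->
  0 < h < 1 ->
  RI (fun r => v' r * phi' h r * r ^ (N - 1)) <=
    S * RI (fun r => Vw Rr alpha r * rpow (v r) p * phi h r * r ^ (N - 1)).
Proof.
  intros HN Hp HR Ha Hinf HS [HC1 [Hv1 _]] Hvpos Hv0 HP HD Hh.
  pose proof (surf_pos N HN) as Hs.
  destruct (C1_cont _ _ HC1) as [cv cv'].
  pose proof (phi_C1 h (proj1 Hh)) as Hphi.
  destruct (C1_cont _ _ Hphi) as [cph cph'].
  pose proof (V_cont Rr alpha HR Ha) as cV.
  assert (crp : cont01 (fun r => rpow (v r) p)).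
  { apply (cont01_comp (fun x => rpow x p)); [apply rpow_cont; lra|auto]. }
  assert (crv : cont01 (fun r => rpow (Rabs (v r)) (p + 1))).
  { apply (cont01_comp (fun x => rpow x (p + 1))); [apply rpow_cont; lra|]. c01. }
  set (A := RI (fun r => v' r * phi' h r * r ^ (N - 1))).
  set (B := RI (fun r => phi' h r ^ 2 * r ^ (N - 1))).
  set (J := RI (fun r => Vw Rr alpha r * rpow (v r) p * phi h r * r ^ (N - 1))).
  assert (HJ : 0 <= J).
  { apply RInt_pos. apply cont01_exRInt; c01. intros x Hx.
    pose proof (V_ge0 Rr alpha x). pose proof (rpow_ge0 (v x) p).
    pose proof (phi_range h x (proj1 Hh) Hx). pose proof (pow_le x (N - 1) (proj1 Hx)).
    apply Rmult_le_pos; [apply Rmult_le_pos; [apply Rmult_le_pos|]|]; lra. }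
  set (k := (p + 1) * surf N * J).
  assert (Hk : 0 <= k) by (unfold k; apply Rmult_le_pos; [apply Rmult_le_pos|]; lra).
  set (M := k * Rabs A + Rabs B / 2).
  apply (lim_le A (S * J) M (Rmin (v 0) (/ (k + 1)))).
  { apply Rmin_pos; auto. apply Rinv_0_lt_compat; lra. }
  intros t Ht.
  assert (Ht1 : - v 0 < t) by (pose proof (Rmin_l (v 0) (/ (k + 1))); lra).
  assert (Ht2 : - / (k + 1) < t) by (pose proof (Rmin_r (v 0) (/ (k + 1))); lra).
  set (D := 1 + k * t).
  assert (HDpos : 0 < D).
  { unfold D. assert (k * (- t) < 1); [|lra].
    assert (- t < / (k + 1)) by lra.
    apply Rle_lt_trans with (k * / (k + 1)).
    - apply Rmult_le_compat_l; lra.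
    - apply (Rmult_lt_reg_r (k + 1)); [lra|]. rewrite Rmult_assoc, Rinv_l; lra. }
  assert (HD1 : D <= 1) by (unfold D; nra).
  assert (Hadm : admissible (fun r => v r + t * phi h r) (fun r => v' r + t * phi' h r)).
  { split; [apply C1_lin; auto|]. split.
    - rewrite Hv1, phi_1 by lra. ring.
    - exists 0. split; [lra|]. rewrite phi_0 by lra. lra. }
  assert (HQ : S <= Quot N p Rr alpha (fun r => v r + t * phi h r) (fun r => v' r + t * phi' h r)).
  { apply (proj1 Hinf). eexists; eexists; split; [exact Hadm|reflexivity]. }
  unfold Quot, Dint, Pint in HQ. cbv beta in HQ.
  assert (cg : cont01 (fun r => rpow (Rabs (v r + t * phi h r)) (p + 1))).
  { apply (cont01_comp (fun x => rpow x (p + 1))); [apply rpow_cont; lra|]. c01. }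
  rewrite !integ_RI in HQ by (apply cont01_exRInt; c01).
  set (PG := RI (fun r => Vw Rr alpha r * rpow (Rabs (v r + t * phi h r)) (p + 1) * r ^ (N - 1))) in HQ.
  set (DG := RI (fun r => (v' r + t * phi' h r) ^ 2 * r ^ (N - 1))) in HQ.
  assert (HPG : RI (fun r => Vw Rr alpha r * rpow (Rabs (v r)) (p + 1) * r ^ (N - 1)) + ((p + 1) * t) * J <= PG).
  { unfold J. rewrite <- RInt_lin by (apply cont01_exRInt; c01).
    apply RInt_mono; [apply cont01_exRInt; c01 | apply cont01_exRInt; c01 |].
    intros r Hr. pose proof (tangent (v r + t * phi h r) (v r) p ltac:(lra) (Hvpos r Hr)) as T.
    rewrite (Rabs_pos_eq (v r)) by (apply Hvpos; auto).
    pose proof (V_ge0 Rr alpha r). pose proof (pow_le r (N - 1) (proj1 Hr)).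
    assert (HX : 0 <= Vw Rr alpha r * r ^ (N - 1)) by (apply Rmult_le_pos; auto).
    apply Rmult_le_compat_l with (r := Vw Rr alpha r * r ^ (N - 1)) in T; auto.
    replace (v r + t * phi h r - v r) with (t * phi h r) in T by ring.
    eapply Rle_trans; [|eapply Rle_trans; [exact T|right; ring]]. right; ring. }
  assert (HPint : D <= surf N * PG).
  { unfold D, k. apply Rmult_le_compat_l with (r := surf N) in HPG; [|lra]. rewrite Rmult_plus_distr_l, HP in HPG. replace (surf N * ((p + 1) * t * J)) with ((p + 1) * surf N * J * t) in HPG by ring. lra. }
  assert (HDG : DG = RI (fun r => (v' r) ^ 2 * r ^ (N - 1)) + (2 * t) * A + t ^ 2 * B).
  { unfold DG, A, B.
    rewrite (RI_ext _ (fun r => ((v' r) ^ 2 * r ^ (N - 1) + (2 * t) * (v' r * phi' h r * r ^ (N - 1)))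
                       + t ^ 2 * (phi' h r ^ 2 * r ^ (N - 1)))) by (intros; ring).
    rewrite RInt_lin by (apply cont01_exRInt; c01).
    rewrite RInt_lin by (apply cont01_exRInt; c01). reflexivity. }
  set (q := 2 / (p + 1)).
  assert (Hq : 0 < q) by (unfold q; apply Rdiv_lt_0_compat; lra).
  assert (HR1 : 1 + q * (k * t / D) <= rpow (surf N * PG) q).
  { eapply Rle_trans; [apply conc|].
    - assert (k * t > -1) by (unfold D in HDpos; lra). exact (Rlt_gt _ _ H).
    - exact Hq.
    - rewrite !rpow_Rpower by (try exact HDpos; lra). apply Rle_Rpower_l; [lra|]. unfold D in HDpos, HPint. lra. }
  assert (Hrp : 0 < rpow (surf N * PG) q) by (apply rpow_gt0; lra).
  assert (HQ' : S * rpow (surf N * PG) q <= surf N * DG).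
  { apply Rmult_le_compat_r with (r := rpow (surf N * PG) q) in HQ; [|lra].
    unfold Rdiv in HQ. rewrite Rmult_assoc, Rinv_l in HQ by lra. lra. }
  rewrite HDG in HQ'.
  assert (H1 : S * (q * (k * t / D)) <= surf N * (2 * t * A + t ^ 2 * B)).
  { assert (S * (1 + q * (k * t / D)) <= S * rpow (surf N * PG) q) by (apply Rmult_le_compat_l; lra).
    nra. }
  assert (Hqk : q * k = 2 * surf N * J) by (unfold q, k; field; lra).
  assert (H2 : 2 * S * surf N * J * t <= surf N * (2 * t * A + t ^ 2 * B) * D).
  { apply Rmult_le_compat_r with (r := D) in H1; [|lra].
    replace (S * (q * (k * t / D)) * D) with (S * (q * k) * t) in H1 by (field; lra).
    rewrite Hqk in H1. lra. }
  assert (H3 : 2 * S * J * t <= (2 * t * A + t ^ 2 * B) * D).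
  { apply (Rmult_le_reg_l (surf N)); auto. lra. }
  assert (H4 : (2 * A + t * B) * D <= 2 * S * J).
  { apply (Rmult_le_reg_l (- t)); [lra|]. nra. }
  assert (HDdef : D = 1 + k * t) by reflexivity.
  assert (HA : A <= S * J + (- t) * (k * A + B * D / 2)).
  { rewrite HDdef in H4 at 1. nra. }
  assert (k * A <= k * Rabs A) by (apply Rmult_le_compat_l; [lra|apply Rle_abs]).
  assert (B * D <= Rabs B).
  { destruct (Rle_dec 0 B). rewrite Rabs_pos_eq by lra. nra. rewrite Rabs_left by lra. nra. }
  assert ((- t) * (k * A + B * D / 2) <= (- t) * M) by (unfold M; apply Rmult_le_compat_l; lra).
  lra.
Qed.

Lemma final_alg sg S be p a : 0 < sg -> 0 < S -> 0 < be -> 1 < p -> 0 <= a ->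
  a <= S * exp (- (p * ln sg + ln be) / (p + 1)) ->
  sg * (rpow S (1 / (p - 1)) * a) ^ 2 <=
  rpow sg ((1 - p) / (p + 1)) * rpow (2 * (p + 1) / (p - 1)) (2 * p / (p + 1)) *
  rpow (/ 2 * ((rpow S (1 / (p - 1))) ^ 2 * S) - / (p + 1) * rpow (rpow S (1 / (p - 1))) (p + 1))
       (2 * p / (p + 1)) / rpow be (2 / (p + 1)).
Proof.
  intros Hsg HS Hbe Hp Ha HaT.
  set (s := ln S). set (g := ln sg). set (b := ln be).
  set (K2 := 2 * (p + 1) / (p - 1)).
  assert (HK2 : 0 < K2) by (unfold K2; apply Rdiv_lt_0_compat; lra).
  set (K := ln K2).
  set (E := - (p * g + b) / (p + 1)).
  set (c := rpow S (1 / (p - 1))).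
  assert (Hc : c = exp (s / (p - 1))) by (unfold c; rewrite rpow_pos by auto; f_equal; unfold s; field; lra).
  assert (HC : / 2 * (c ^ 2 * S) - / (p + 1) * rpow c (p + 1) = exp ((p + 1) / (p - 1) * s - K)).
  { rewrite (rpow_pos c) by (rewrite Hc; apply exp_pos). rewrite Hc, ln_exp.
    replace S with (exp s) at 1 by (unfold s; apply exp_ln; auto).
    replace (exp (s / (p - 1)) ^ 2 * exp s) with (exp ((p + 1) / (p - 1) * s))
      by (simpl; rewrite Rmult_1_r, <- !exp_plus; f_equal; field; lra).
    replace ((p + 1) * (s / (p - 1))) with ((p + 1) / (p - 1) * s) by (field; lra).
    replace ((p + 1) / (p - 1) * s - K) with ((p + 1) / (p - 1) * s + - K) by ring.
    rewrite exp_plus, exp_Ropp. unfold K. rewrite exp_ln by auto.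
    unfold K2. field. lra. }
  rewrite HC.
  assert (Hbound : sg * (c * a) ^ 2 <= sg * (c * (S * exp E)) ^ 2).
  { apply Rmult_le_compat_l; [lra|]. assert (0 < c) by (rewrite Hc; apply exp_pos).
    apply pow_incr. split; [apply Rmult_le_pos; lra|]. apply Rmult_le_compat_l; [lra|exact HaT]. }
  eapply Rle_trans; [exact Hbound|]. right.
  rewrite !rpow_pos by (auto; apply exp_pos).
  rewrite ln_exp. fold g. fold b. fold K.
  rewrite Hc. replace S with (exp s) by (unfold s; apply exp_ln; auto).
  replace sg with (exp g) at 1 by (unfold g; apply exp_ln; auto).
  simpl. rewrite !Rmult_1_r. unfold Rdiv at 3. rewrite <- exp_Ropp. rewrite <- !exp_plus.
  f_equal. unfold E. field. lra.
Qed.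

Lemma deriv_end v l : derivable_pt_lim v 1 l -> (forall r, 0 <= r < 1 -> 0 < v r) -> v 1 = 0 -> l <= 0.
Proof.
  intros H Hpos Hv1. destruct (Rle_dec l 0) as [|Hn]; auto. exfalso.
  destruct (H l ltac:(lra)) as [d Hd].
  pose proof (cond_pos d) as Hd0.
  set (k := - Rmin (d / 2) (1 / 2)).
  assert (Hk1 : 0 < Rmin (d / 2) (1 / 2)) by (apply Rmin_pos; lra).
  assert (Hk2 : Rmin (d / 2) (1 / 2) <= d / 2) by apply Rmin_l.
  assert (Hk3 : Rmin (d / 2) (1 / 2) <= 1 / 2) by apply Rmin_r.
  specialize (Hd k ltac:(unfold k; lra) ltac:(unfold k; rewrite Rabs_Ropp, Rabs_pos_eq; lra)).
  rewrite Hv1, Rminus_0_r in Hd. apply Rabs_def2 in Hd.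
  assert (Hvp : 0 < v (1 + k)) by (apply Hpos; unfold k; lra).
  assert (v (1 + k) / k < 0).
  { unfold Rdiv. assert (/ k < 0) by (apply Rinv_lt_0_compat; unfold k; lra). nra. }
  lra.
Qed.

Lemma eps_le a b : (forall eps, 0 < eps -> a - eps <= b) -> a <= b.
Proof.
  intros H. destruct (Rle_dec a b) as [|Hn]; auto. specialize (H ((a - b) / 2) ltac:(lra)). lra.
Qed.

Lemma rpow_mult_abs c x a : 0 < c -> rpow (Rabs (c * x)) a = rpow c a * rpow (Rabs x) a.
Proof.
  intros Hc. rewrite Rabs_mult, (Rabs_pos_eq c) by lra.
  destruct (Req_dec (Rabs x) 0) as [E|E].
  - rewrite E, Rmult_0_r, !(rpow_nonpos 0) by lra. ring.
  - pose proof (Rabs_pos x). assert (0 < Rabs x) by lra.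
    rewrite !rpow_pos by (try apply Rmult_lt_0_compat; auto).
    rewrite ln_mult by auto. rewrite <- exp_plus. f_equal. ring.
Qed.

Theorem mainTheorem9 (N : nat) (p Rr alpha S : R) (v v' : R -> R) :
  (2 <= N)%nat -> 1 < p -> ((3 <= N)%nat -> p < (INR N + 2) / (INR N - 2)) ->
  0 <= Rr <= 1 -> 0 < alpha ->
  is_inf (RayleighSet N p Rr alpha) S ->
  admissible v v' ->
  (forall r, 0 <= r < 1 -> 0 < v r) ->
  Pint N p Rr alpha v = 1 ->
  Quot N p Rr alpha v v' = S ->
  let c := rpow S (1 / (p - 1)) in
  let u := fun r => c * v r in
  let u' := fun r => c * v' r in
  let C := Ienergy N p Rr alpha u u' in
  surf N * (u' 1) ^ 2 <=
    Kstar N p * rpow C (2 * p / (p + 1)) / rpow (alpha + 1) (2 / (p + 1)).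
Proof.
  intros HN Hp _ HR Ha Hinf Hadm Hpos HP HQ c u u' C.
  pose proof (surf_pos N HN) as Hs.
  assert (Hu1 : u' 1 = c * v' 1) by reflexivity.
  assert (Hbe : 0 < rpow (alpha + 1) (2 / (p + 1))) by (apply rpow_gt0; lra).
  destruct (Rle_dec S 0) as [HS0|HS0].
  { assert (Hc0 : c = 0) by (unfold c; apply rpow_nonpos; auto).
    rewrite Hu1, Hc0. replace (surf N * (0 * v' 1) ^ 2) with 0 by (simpl; ring).
    unfold Kstar. unfold Rdiv. apply Rmult_le_pos; [|left; apply Rinv_0_lt_compat; auto].
    apply Rmult_le_pos; [apply Rmult_le_pos|]; apply rpow_ge0. }
  assert (HS : 0 < S) by lra. clear HS0.
  destruct Hadm as [HC1 [Hv1 Hnz]].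
  destruct (C1_cont _ _ HC1) as [cv cv'].
  pose proof (V_cont Rr alpha HR Ha) as cV.
  assert (crp : cont01 (fun r => rpow (v r) p)).
  { apply (cont01_comp (fun x => rpow x p)); [apply rpow_cont; lra|auto]. }
  assert (crv : cont01 (fun r => rpow (Rabs (v r)) (p + 1))).
  { apply (cont01_comp (fun x => rpow x (p + 1))); [apply rpow_cont; lra|]. c01. }
  set (P0 := RI (fun r => Vw Rr alpha r * rpow (Rabs (v r)) (p + 1) * r ^ (N - 1))).
  assert (HP0 : surf N * P0 = 1).
  { unfold Pint in HP. rewrite integ_RI in HP by (apply cont01_exRInt; c01). exact HP. }
  assert (HDv : surf N * RI (fun r => (v' r) ^ 2 * r ^ (N - 1)) = S).
  { unfold Quot in HQ. rewrite HP, rpow_one in HQ. unfold Rdiv in HQ. rewrite Rinv_1, Rmult_1_r in HQ.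
    unfold Dint in HQ. rewrite integ_RI in HQ by (apply cont01_exRInt; c01). exact HQ. }
  assert (Hvnn : forall r, 0 <= r <= 1 -> 0 <= v r).
  { intros r Hr. destruct (Req_dec r 1) as [->|]. rewrite Hv1; lra. left; apply Hpos; lra. }
  assert (Hv0 : 0 < v 0) by (apply Hpos; lra).
  set (J := RI (fun r => Vw Rr alpha r * rpow (v r) p * r ^ (N - 1))).
  assert (HaJ : - v' 1 <= S * J).
  { apply eps_le. intros eps He.
    assert (cg : cont01 (fun r => v' r * r ^ (N - 1))) by c01.
    destruct (bdry _ cg eps He) as [h [Hh Hb]].
    pose proof (var_ineq N p Rr alpha S v v' h HN Hp HR Ha Hinf HS
                 (conj HC1 (conj Hv1 Hnz)) Hvnn Hv0 HP0 HDv Hh) as Hvi.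
    pose proof (phi_C1 h (proj1 Hh)) as Hphi. destruct (C1_cont _ _ Hphi) as [cph cph'].
    rewrite (RI_ext _ (fun r => v' r * phi' h r * r ^ (N - 1))) in Hb by (intros; ring).
    rewrite pow1, Rmult_1_r in Hb.
    assert (HJJ : RI (fun r => Vw Rr alpha r * rpow (v r) p * phi h r * r ^ (N - 1)) <= J).
    { apply RInt_mono; [apply cont01_exRInt; c01|apply cont01_exRInt; c01|].
      intros r Hr. pose proof (V_ge0 Rr alpha r). pose proof (rpow_ge0 (v r) p).
      pose proof (phi_range h r (proj1 Hh) Hr). pose proof (pow_le r (N - 1) (proj1 Hr)).
      assert (0 <= Vw Rr alpha r * rpow (v r) p * r ^ (N - 1)) by (apply Rmult_le_pos; [apply Rmult_le_pos|]; lra).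
      nra. }
    assert (S * RI (fun r => Vw Rr alpha r * rpow (v r) p * phi h r * r ^ (N - 1)) <= S * J)
      by (apply Rmult_le_compat_l; lra).
    lra. }
  assert (Hd1 : v' 1 <= 0).
  { destruct HC1 as [Hd _]. apply (deriv_end v); auto. apply Hd; lra. }
  set (be := alpha + 1).
  set (l := (ln (surf N) - ln be) / (p + 1)).
  set (E := - (p * ln (surf N) + ln be) / (p + 1)).
  assert (HJE : J <= exp E).
  { set (W := RI (fun r => Vw Rr alpha r * r ^ (N - 1))).
    assert (HW : W <= / be).
    { assert (HV : RI (Vw Rr alpha) = 1 / (alpha + 1)) by (apply RI_is, V_int; auto).
      replace (/ be) with (RI (Vw Rr alpha)) by (rewrite HV; unfold be; field; lra).
      apply RInt_mono; [apply cont01_exRInt; c01 | apply cont01_exRInt; auto|].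
      intros r Hr. pose proof (V_ge0 Rr alpha r).
      assert (r ^ (N - 1) <= 1) by (rewrite <- (pow1 (N - 1)); apply pow_incr; lra). nra. }
    set (c1 := p / (p + 1) * exp l). set (c2 := / (p + 1) * exp (- p * l)).
    assert (Hc2 : 0 <= c2) by (unfold c2; apply Rmult_le_pos; [left; apply Rinv_0_lt_compat; lra|left; apply exp_pos]).
    assert (HJ1 : J <= c1 * P0 + c2 * W).
    { unfold P0, W. rewrite <- RInt_scalR by (apply cont01_exRInt; c01).
      rewrite <- RInt_lin by (apply cont01_exRInt; c01).
      apply RInt_mono; [apply cont01_exRInt; c01|apply cont01_exRInt; c01|].
      intros r Hr. pose proof (young (v r) p l ltac:(lra) (Hvnn r Hr)) as Y.
      rewrite (Rabs_pos_eq (v r)) by (apply Hvnn; auto).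
      pose proof (V_ge0 Rr alpha r). pose proof (pow_le r (N - 1) (proj1 Hr)).
      assert (HX : 0 <= Vw Rr alpha r * r ^ (N - 1)) by (apply Rmult_le_pos; auto).
      apply Rmult_le_compat_l with (r := Vw Rr alpha r * r ^ (N - 1)) in Y; auto.
      unfold c1, c2. eapply Rle_trans; [|eapply Rle_trans; [exact Y|right; ring]]. right; ring. }
    assert (HP0' : P0 = / surf N) by (apply (Rmult_eq_reg_l (surf N)); [rewrite HP0; field|]; lra).
    assert (Hsum : c1 * / surf N + c2 * / be = exp E).
    { assert (I1 : / surf N = exp (- ln (surf N))) by (rewrite exp_Ropp, exp_ln; auto).
      assert (I2 : / be = exp (- ln be)) by (rewrite exp_Ropp, exp_ln; unfold be; auto; lra).
      rewrite I1, I2. unfold c1, c2, E, l.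
      rewrite !Rmult_assoc, <- !exp_plus.
      replace ((ln (surf N) - ln be) / (p + 1) + - ln (surf N)) with (- (p * ln (surf N) + ln be) / (p + 1)) by (field; lra).
      replace (- p * ((ln (surf N) - ln be) / (p + 1)) + - ln be) with (- (p * ln (surf N) + ln be) / (p + 1)) by (field; lra).
      field. lra. }
    rewrite HP0' in HJ1. assert (c2 * W <= c2 * / be) by (apply Rmult_le_compat_l; auto). lra. }
  assert (Hc : 0 < c) by (unfold c; apply rpow_gt0; auto).
  assert (HC : C = / 2 * (c ^ 2 * S) - / (p + 1) * rpow c (p + 1)).
  { unfold C, Ienergy, Dint, Pint, u, u'. cbv beta.
    assert (crc : cont01 (fun r => rpow (Rabs (c * v r)) (p + 1))).
    { apply (cont01_comp (fun x => rpow x (p + 1))); [apply rpow_cont; lra|]. c01. }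
    rewrite !integ_RI by (apply cont01_exRInt; c01).
    rewrite (RI_ext _ (fun r => c ^ 2 * ((v' r) ^ 2 * r ^ (N - 1)))) by (intros; ring).
    rewrite (RI_ext (fun r => Vw Rr alpha r * rpow (Rabs (c * v r)) (p + 1) * r ^ (N - 1)) (fun r => rpow c (p + 1) * (Vw Rr alpha r * rpow (Rabs (v r)) (p + 1) * r ^ (N - 1))))
      by (intros; cbv beta; rewrite rpow_mult_abs by auto; ring).
    rewrite !RInt_scalR by (apply cont01_exRInt; c01). fold P0.
    replace (surf N * (rpow c (p + 1) * P0)) with (rpow c (p + 1) * (surf N * P0)) by ring.
    rewrite HP0. rewrite <- HDv. ring. }
  rewrite Hu1, HC. unfold Kstar.
  replace ((c * v' 1) ^ 2) with ((c * (- v' 1)) ^ 2) by ring.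
  apply final_alg; auto; try lra.
  - unfold be; lra.
  - eapply Rle_trans; [exact HaJ|]. apply Rmult_le_compat_l; [lra|]. exact HJE.
Qed.
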